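(* Let $(X,d)$ be a metric space and $\mu\colon X^3\to X$ a ternary operation. Then $\mu$ satisfies conditions (C1) and (C2) below if and only if it satisfies conditions (C0)', (C1)' and (C2)' below. (C1): There is an affine function $\rho(t)=Kt+H_0$ such that for all $a,b,c,a',b',c'\in X$, $d(\mu(a,b,c),\mu(a',b',c'))\leqslant \rho(d(a,a')+d(b,b')+d(c,c'))$. (C2): There is a function $H\colon\mathbb N\to[0,\infty)$ such that for every finite subset $A\subseteq X$ with $1\leqslant |A|\leqslant p$ there exist a finite median algebra $(\Pi,\mu_\Pi)$ and maps $\pi\colon A\to\Pi$, $\lambda\colon\Pi\to X$ such that for all $x,y,z\in\Pi$ and $a\in A$: $d(\lambda\mu_\Pi(x,y,z),\mu(\lambda x,\lambda y,\lambda z))\leqslant H(p)$ and $d(\lambda\pi a,a)\leqslant H(p)$. (C0)': There is a constant $\kappa_0$ such that for all $a_1,a_2,a_3\in X$, $d(\mu(a_1,a_1,a_2),a_1)\leqslant\kappa_0$, and $d(\mu(a_{\sigma(1)},a_{\sigma(2)},a_{\sigma(3)}),\mu(a_1,a_2,a_3))\leqslant\kappa_0$ for every permutation $\sigma$ of $\{1,2,3\}$. (C1)': There is an affine function $\rho\colon[0,\infty)\to[0,\infty)$ such that for all $a,a',b,c\in X$, $d(\mu(a,b,c),\mu(a',b,c))\leqslant\rho(d(a,a'))$. (C2)': There is a constant $\kappa_4>0$ such that for all $a,b,c,d\in X$, $d\big(\mu(\mu(a,b,c),b,d),\,\mu(a,b,\mu(c,b,d))\big)\leqslant\kappa_4$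.
   Context: A median algebra is a set $Y$ with a ternary operation $m$ satisfying: $m(a,a,b)=a$; $m(a_1,a_2,a_3)$ is invariant under permutations of its arguments; and $m(m(a,b,c),b,d)=m(a,b,m(c,b,d))$ for all $a,b,c,d\in Y$. *)

(* Defs.v *)
From Stdlib Require Import Reals List.
Open Scope R_scope.

Record is_metric {X : Type} (d : X -> X -> R) : Prop := {
  metric_nonneg : forall x y, 0 <= d x y;
  metric_sep : forall x y, d x y = 0 <-> x = y;
  metric_sym : forall x y, d x y = d y x;
  metric_tri : forall x y z, d x z <= d x y + d y z
}.

Definition is_median_algebra {Y : Type} (m : Y -> Y -> Y -> Y) : Prop :=
  (forall a b, m a a b = a) /\
  (forall a1 a2 a3, m a1 a2 a3 = m a2 a1 a3 /\ m a1 a2 a3 = m a1 a3 a2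
                    /\ m a1 a2 a3 = m a3 a2 a1) /\
  (forall a b c d, m (m a b c) b d = m a b (m c b d)).

Definition is_finite_type (Y : Type) : Prop := exists l : list Y, forall y, In y l.

Inductive idx3 : Type := i1 | i2 | i3.
Definition is_perm3 (s : idx3 -> idx3) : Prop :=
  exists s' : idx3 -> idx3, (forall i, s' (s i) = i) /\ (forall i, s (s' i) = i).

Definition cond_C1 {X : Type} (d : X -> X -> R) (mu : X -> X -> X -> X) : Prop :=
  exists K H0 : R, forall a b c a' b' c',
    d (mu a b c) (mu a' b' c') <= K * (d a a' + d b b' + d c c') + H0.

(* A finite subset A of X with 1 <= |A| <= p is a duplicate-free list. *)
Definition cond_C2 {X : Type} (d : X -> X -> R) (mu : X -> X -> X -> X) : Prop :=
  exists H : nat -> R, (forall p, 0 <= H p) /\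
  forall (p : nat) (A : list X), NoDup A -> (1 <= length A <= p)%nat ->
    exists (Pi : Type) (muPi : Pi -> Pi -> Pi -> Pi),
      is_finite_type Pi /\ is_median_algebra muPi /\
      exists (pi : {a : X | In a A} -> Pi) (lam : Pi -> X),
        (forall x y z : Pi, d (lam (muPi x y z)) (mu (lam x) (lam y) (lam z)) <= H p) /\
        (forall a : {a : X | In a A}, d (lam (pi a)) (proj1_sig a) <= H p).

Definition cond_C0' {X : Type} (d : X -> X -> R) (mu : X -> X -> X -> X) : Prop :=
  exists k0 : R, forall a : idx3 -> X,
    d (mu (a i1) (a i1) (a i2)) (a i1) <= k0 /\
    forall s, is_perm3 s ->
      d (mu (a (s i1)) (a (s i2)) (a (s i3))) (mu (a i1) (a i2) (a i3)) <= k0.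

(* affine rho : [0,oo) -> [0,oo), rho t = K t + H0, means K >= 0 and H0 >= 0 *)
Definition cond_C1' {X : Type} (d : X -> X -> R) (mu : X -> X -> X -> X) : Prop :=
  exists K H0 : R, 0 <= K /\ 0 <= H0 /\ forall a a' b c,
    d (mu a b c) (mu a' b c) <= K * d a a' + H0.

Definition cond_C2' {X : Type} (d : X -> X -> R) (mu : X -> X -> X -> X) : Prop :=
  exists k4 : R, 0 < k4 /\ forall a b c e,
    d (mu (mu a b c) b e) (mu a b (mu c b e)) <= k4.

(* Main.v *)
Require Import Defs.
From Stdlib Require Import Reals List Bool Arith Lia Lra Classical ClassicalEpsilon FunctionalExtensionality PropExtensionality ProofIrrelevance.
Import ListNotations.

Section MedS.
Variable M : Type.
Variable m : M -> M -> M -> M.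
Hypothesis ax1 : forall a b, m a a b = a.
Hypothesis ax2a : forall a b c, m a b c = m b a c.
Hypothesis ax2b : forall a b c, m a b c = m a c b.
Hypothesis ax3 : forall a b c d, m (m a b c) b d = m a b (m c b d).

Lemma p132 a b c : m a b c = m a c b. Proof. apply ax2b. Qed.
Lemma p213 a b c : m a b c = m b a c. Proof. apply ax2a. Qed.
Lemma p231 a b c : m a b c = m b c a. Proof. rewrite (ax2a a b c), (ax2b b a c). reflexivity. Qed.
Lemma p312 a b c : m a b c = m c a b. Proof. rewrite (p231 a b c), (p231 b c a). reflexivity. Qed.
Lemma p321 a b c : m a b c = m c b a. Proof. rewrite (p312 a b c), (ax2b c a b). reflexivity. Qed.
Lemma ax1b a b : m a b a = a. Proof. rewrite p132. apply ax1. Qed.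
Lemma ax1c a b : m b a a = a. Proof. rewrite (p231 b a a). apply ax1. Qed.

Inductive tm := V (n : nat) | N (a b c : tm).
Fixpoint eval (env : nat -> M) (t : tm) : M :=
  match t with V n => env n | N a b c => m (eval env a) (eval env b) (eval env c) end.
Fixpoint tm_eqb (s t : tm) : bool :=
  match s, t with
  | V i, V j => Nat.eqb i j
  | N a b c, N a' b' c' => tm_eqb a a' && tm_eqb b b' && tm_eqb c c'
  | _, _ => false end.
Lemma tm_eqb_eq s t : tm_eqb s t = true -> s = t.
Proof.
  revert t; induction s as [i|a IHa b IHb c IHc]; intros [j|a' b' c']; simpl; try discriminate.
  - intros H; apply Nat.eqb_eq in H; subst; reflexivity.
  - intros H; apply andb_prop in H as [H H3]; apply andb_prop in H as [H1 H2].
    rewrite (IHa _ H1), (IHb _ H2), (IHc _ H3); reflexivity.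
Qed.
Fixpoint tm_cmp (s t : tm) : comparison :=
  match s, t with
  | V i, V j => Nat.compare i j
  | V _, N _ _ _ => Lt
  | N _ _ _, V _ => Gt
  | N a b c, N a' b' c' =>
      match tm_cmp a a' with Eq => match tm_cmp b b' with Eq => tm_cmp c c' | r => r end | r => r end
  end.
Definition tleb s t := match tm_cmp s t with Gt => false | _ => true end.
Definition sort3 a b c :=
  if tleb a b then (if tleb b c then N a b c else if tleb a c then N a c b else N c a b)
  else (if tleb a c then N b a c else if tleb b c then N b c a else N c b a).
Lemma sort3_ok env a b c : eval env (sort3 a b c) = m (eval env a) (eval env b) (eval env c).
Proof.
  unfold sort3; destruct (tleb a b), (tleb b c), (tleb a c); simpl;
  first [reflexivity | rewrite p132; reflexivity | rewrite p213; reflexivity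
        | rewrite p231; reflexivity | rewrite p312; reflexivity | rewrite p321; reflexivity].
Qed.
Fixpoint norm t := match t with V n => V n | N a b c => sort3 (norm a) (norm b) (norm c) end.
Lemma norm_ok env t : eval env (norm t) = eval env t.
Proof. induction t; simpl; [reflexivity|]. rewrite sort3_ok, IHt1, IHt2, IHt3; reflexivity. Qed.

Definition views (x y z : tm) : list (tm*tm*tm) :=
  [(x,y,z);(x,z,y);(y,x,z);(y,z,x);(z,x,y);(z,y,x)].
Lemma views_ok env x y z a b c : In (a,b,c) (views x y z) ->
  m (eval env a) (eval env b) (eval env c) = m (eval env x) (eval env y) (eval env z).
Proof.
  unfold views; simpl; intros H;
  repeat destruct H as [H|H]; try (injection H; intros; subst); try contradiction;
  first [reflexivity | rewrite p132; reflexivity | rewrite p213; reflexivity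
        | rewrite p231; reflexivity | rewrite p312; reflexivity | rewrite p321; reflexivity].
Qed.

Definition m1_steps (x y z : tm) : list tm :=
  flat_map (fun v => match v with (a,b,c) => if tm_eqb a b then [a] else [] end) (views x y z).
Definition m3_steps (x y z : tm) : list tm :=
  flat_map (fun v => match v with (A,b,d) =>
    match A with
    | N p q r => flat_map (fun w => match w with (p',q',r') =>
                   if tm_eqb q' b then [sort3 p' b (sort3 r' b d)] else [] end) (views p q r)
    | _ => [] end end) (views x y z).
Definition d_steps (x y z : tm) : list tm :=
  flat_map (fun v => match v with (A,d,e) =>
    match A with
    | N p q r => map (fun w => match w with (a,b,c) => sort3 (sort3 a d e) b (sort3 c d e) end) (views p q r)
    | _ => [] end end) (views x y z).
Definition e1_steps (x y z : tm) : list tm :=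
  flat_map (fun v => match v with (a,b,Z) =>
    match Z with
    | N p q r => flat_map (fun w => match w with (p',q',r') =>
                   if tm_eqb p' a && tm_eqb q' b then [Z] else [] end) (views p q r)
    | _ => [] end end) (views x y z).
Fixpoint gr_steps (G : list (tm*tm)) (t : tm) : list tm :=
  match G with
  | [] => []
  | (l,r) :: G' => (if tm_eqb t (norm l) then [norm r] else []) ++
                   (if tm_eqb t (norm r) then [norm l] else []) ++ gr_steps G' t
  end.
Fixpoint steps (useD : bool) (G : list (tm*tm)) (t : tm) : list tm :=
  gr_steps G t ++
  match t with
  | V _ => []
  | N x y z => m1_steps x y z ++ m3_steps x y z ++ e1_steps x y z ++
               (if useD then d_steps x y z else []) ++
               map (fun s => sort3 s y z) (steps useD G x) ++
               map (fun s => sort3 x s z) (steps useD G y) ++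
               map (fun s => sort3 x y s) (steps useD G z)
  end.

Fixpoint Gok env (G : list (tm*tm)) : Prop :=
  match G with [] => True | (l,r) :: G' => eval env l = eval env r /\ Gok env G' end.

Lemma in_flat_map' {A B} (f : A -> list B) l y : In y (flat_map f l) -> exists x, In x l /\ In y (f x).
Proof. intros H; apply in_flat_map in H; exact H. Qed.

Lemma E1 a b c : m a b (m a b c) = m a b c.
Proof. rewrite <- ax3, ax1b. reflexivity. Qed.

Lemma gr_steps_ok env G t s : Gok env G -> In s (gr_steps G t) -> eval env s = eval env t.
Proof.
  induction G as [|[l r] G IHG]; intros HG Hs; [destruct Hs|].
  destruct HG as [Hlr HG]. cbn [gr_steps] in Hs.
  apply in_app_or in Hs as [Hs|Hs]; [|apply in_app_or in Hs as [Hs|Hs]].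
  - destruct (tm_eqb t (norm l)) eqn:E; [|destruct Hs]. apply tm_eqb_eq in E.
    destruct Hs as [<-|[]]. rewrite E, !norm_ok; symmetry; exact Hlr.
  - destruct (tm_eqb t (norm r)) eqn:E; [|destruct Hs]. apply tm_eqb_eq in E.
    destruct Hs as [<-|[]]. rewrite E, !norm_ok; exact Hlr.
  - apply IHG; assumption.
Qed.

Lemma steps_ok (useD : bool) env G t s
  (HD : useD = true -> forall a b c d e, m (m a b c) d e = m (m a d e) b (m c d e)) :
  Gok env G -> In s (steps useD G t) -> eval env s = eval env t.
Proof.
  intros HG; revert s; induction t as [i|x IHx y IHy z IHz]; intros s Hs; simpl in Hs.
  - rewrite app_nil_r in Hs. eapply gr_steps_ok; eauto.
  - apply in_app_or in Hs as [Hs|Hs].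
    { eapply gr_steps_ok; eauto. }
    simpl.
    apply in_app_or in Hs as [Hs|Hs].
    { unfold m1_steps in Hs. apply in_flat_map' in Hs as [[[a b] c] [Hv Hs]].
      destruct (tm_eqb a b) eqn:E; [|simpl in Hs; contradiction]. apply tm_eqb_eq in E; subst b.
      destruct Hs as [<-|[]]. rewrite <- (views_ok env x y z a a c Hv), ax1; reflexivity. }
    apply in_app_or in Hs as [Hs|Hs].
    { unfold m3_steps in Hs. apply in_flat_map' in Hs as [[[A b] d] [Hv Hs]].
      destruct A as [|p q r]; [contradiction|].
      apply in_flat_map' in Hs as [[[p' q'] r'] [Hw Hs]].
      destruct (tm_eqb q' b) eqn:E; [|simpl in Hs; contradiction]. apply tm_eqb_eq in E; subst q'.
      destruct Hs as [<-|[]]. rewrite <- (views_ok env x y z _ _ _ Hv). simpl.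
      rewrite <- (views_ok env p q r _ _ _ Hw), !sort3_ok, ax3. reflexivity. }
    apply in_app_or in Hs as [Hs|Hs].
    { unfold e1_steps in Hs. apply in_flat_map' in Hs as [[[a b] Z] [Hv Hs]].
      destruct Z as [|p q r]; [contradiction|].
      apply in_flat_map' in Hs as [[[p' q'] r'] [Hw Hs]].
      destruct (tm_eqb p' a) eqn:E1'; [|simpl in Hs; contradiction].
      destruct (tm_eqb q' b) eqn:E2; [|simpl in Hs; contradiction].
      apply tm_eqb_eq in E1'; apply tm_eqb_eq in E2; subst.
      destruct Hs as [<-|[]]. rewrite <- (views_ok env x y z _ _ _ Hv). simpl.
      rewrite <- (views_ok env p q r _ _ _ Hw), E1. reflexivity. }
    apply in_app_or in Hs as [Hs|Hs].
    { destruct useD; [|simpl in Hs; contradiction]. specialize (HD eq_refl).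
      unfold d_steps in Hs. apply in_flat_map' in Hs as [[[A d] e] [Hv Hs]].
      destruct A as [|p q r]; [contradiction|].
      apply in_map_iff in Hs as [[[a b] c] [<- Hw]].
      rewrite <- (views_ok env x y z _ _ _ Hv). simpl.
      rewrite <- (views_ok env p q r _ _ _ Hw), !sort3_ok. symmetry; apply HD. }
    apply in_app_or in Hs as [Hs|Hs].
    { apply in_map_iff in Hs as [s' [<- Hs']]. rewrite sort3_ok, (IHx _ Hs'). reflexivity. }
    apply in_app_or in Hs as [Hs|Hs].
    { apply in_map_iff in Hs as [s' [<- Hs']]. rewrite sort3_ok, (IHy _ Hs'). reflexivity. }
    { apply in_map_iff in Hs as [s' [<- Hs']]. rewrite sort3_ok, (IHz _ Hs'). reflexivity. }
Qed.

Definition step_ok useD G (t s : tm) : bool :=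
  let a := norm t in let b := norm s in
  tm_eqb a b || existsb (tm_eqb b) (steps useD G a) || existsb (tm_eqb a) (steps useD G b).

Fixpoint chain_ok useD G (t : tm) (l : list tm) : bool :=
  match l with [] => true | s :: l' => step_ok useD G t s && chain_ok useD G s l' end.

Lemma existsb_in b l : existsb (tm_eqb b) l = true -> In b l.
Proof.
  induction l; simpl; [discriminate|]. intros H; apply orb_prop in H as [H|H].
  - left; symmetry; apply tm_eqb_eq; exact H.
  - right; auto.
Qed.

Lemma chain_sound useD env G t l
  (HD : useD = true -> forall a b c d e, m (m a b c) d e = m (m a d e) b (m c d e)) :
  Gok env G -> chain_ok useD G t l = true -> eval env t = eval env (last l t).
Proof.
  intros HG; revert t; induction l as [|s l IH]; intros t H; simpl; [reflexivity|].
  simpl in H; apply andb_prop in H as [H1 H2].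
  assert (eval env t = eval env s).
  { unfold step_ok in H1. apply orb_prop in H1 as [H1|H1]; [apply orb_prop in H1 as [H1|H1]|].
    - apply tm_eqb_eq in H1. rewrite <- (norm_ok env t), <- (norm_ok env s), H1. reflexivity.
    - apply existsb_in in H1.
      rewrite <- (norm_ok env t), <- (norm_ok env s). symmetry. eapply steps_ok; eauto.
    - apply existsb_in in H1. rewrite <- (norm_ok env t), <- (norm_ok env s). eapply steps_ok; eauto. }
  rewrite H. specialize (IH s H2). destruct l as [|s' l']; [reflexivity|].
  rewrite IH. cbn [last]. f_equal. clear. revert s'; induction l' as [|x l' IHl]; intros s'; [reflexivity|].
  cbn [last]. apply IHl.
Qed.

Lemma L1 : forall u o v w, m (m u o v) o (m u v w) = m u o v.
Proof.
  intros u o v w .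
  refine (chain_sound false (fun i => nth i [u;o;v;w] u) [] (N (N (V 0) (V 1) (V 2)) (V 1) (N (V 0) (V 2) (V 3))) [(N (V 1) (N (V 0) (V 1) (V 2)) (N (V 0) (V 2) (V 3))); (N (V 1) (N (V 0) (V 2) (V 3)) (N (V 0) (V 2) (N (V 0) (V 1) (V 1)))); (N (V 1) (N (V 0) (V 2) (V 3)) (N (V 0) (V 1) (N (V 0) (V 1) (V 2)))); (N (V 1) (N (V 0) (V 1) (V 2)) (N (V 0) (V 1) (N (V 0) (V 2) (V 3)))); (N (V 1) (N (V 0) (V 1) (V 2)) (N (V 0) (V 3) (N (V 0) (V 1) (V 2)))); (N (V 3) (N (V 0) (V 1) (V 2)) (N (V 0) (V 1) (N (V 0) (V 1) (V 2)))); (N (V 3) (N (V 0) (V 1) (V 2)) (N (V 0) (V 2) (N (V 0) (V 1) (V 1)))); (N (V 3) (N (V 0) (V 1) (V 2)) (N (V 0) (V 1) (V 2))); (N (V 0) (V 1) (V 2)); (N (V 0) (V 1) (V 2))] _  I _).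
  - discriminate.
  - vm_compute; reflexivity.
Qed.

Lemma G1 : forall w d e t, m d t e = t -> m w (m w d e) t = m w d e.
Proof.
  intros w d e t H0.
  refine (chain_sound false (fun i => nth i [w;d;e;t] w) [((N (V 1) (V 3) (V 2)), (V 3))] (N (V 0) (N (V 0) (V 1) (V 2)) (V 3)) [(N (V 0) (V 3) (N (V 0) (V 1) (V 2))); (N (V 0) (V 3) (N (V 0) (V 2) (N (V 0) (V 1) (V 1)))); (N (V 0) (V 3) (N (V 0) (V 1) (N (V 0) (V 1) (V 2)))); (N (V 0) (N (V 0) (V 1) (V 2)) (N (V 0) (V 1) (V 3))); (N (V 0) (N (V 0) (V 1) (V 2)) (N (V 0) (V 1) (N (V 1) (V 2) (V 3)))); (N (V 0) (N (V 0) (V 1) (V 2)) (N (V 1) (V 3) (N (V 0) (V 1) (V 2)))); (N (V 3) (N (V 0) (V 1) (V 2)) (N (V 0) (V 1) (N (V 0) (V 1) (V 2)))); (N (V 3) (N (V 0) (V 1) (V 2)) (N (V 0) (V 2) (N (V 0) (V 1) (V 1)))); (N (V 3) (N (V 0) (V 1) (V 2)) (N (V 0) (V 1) (V 2))); (N (V 0) (V 1) (V 2)); (N (V 0) (V 1) (V 2))] _ (conj H0 I) _).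
  - discriminate.
  - vm_compute; reflexivity.
Qed.

Lemma U3 : forall a b c y, m a y b = y -> m b y c = y -> m a y c = y -> y = m a b c.
Proof.
  intros a b c y H0 H1 H2.
  refine (chain_sound false (fun i => nth i [a;b;c;y] a) [((N (V 0) (V 3) (V 1)), (V 3)); ((N (V 1) (V 3) (V 2)), (V 3)); ((N (V 0) (V 3) (V 2)), (V 3))] (V 3) [(V 3); (N (V 0) (V 1) (V 3)); (N (V 0) (V 1) (N (V 0) (V 2) (V 3))); (N (V 0) (V 1) (N (V 0) (V 2) (N (V 0) (V 2) (V 3)))); (N (V 0) (V 1) (N (V 0) (V 2) (N (V 0) (V 2) (N (V 1) (V 2) (V 3))))); (N (V 0) (N (V 0) (V 1) (V 2)) (N (V 0) (V 2) (N (V 1) (V 2) (V 3)))); (N (V 0) (N (V 0) (V 1) (V 2)) (N (V 2) (V 3) (N (V 0) (V 1) (V 2)))); (N (V 3) (N (V 0) (V 1) (V 2)) (N (V 0) (V 2) (N (V 0) (V 1) (V 2)))); (N (V 3) (N (V 0) (V 1) (V 2)) (N (V 0) (V 1) (N (V 0) (V 2) (V 2)))); (N (V 3) (N (V 0) (V 1) (V 2)) (N (V 0) (V 1) (V 2))); (N (V 0) (V 1) (V 2)); (N (V 0) (V 1) (V 2))] _ (conj H0 (conj H1 (conj H2 I))) _).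
  - discriminate.
  - vm_compute; reflexivity.
Qed.



Lemma le_trans o x y z : m x o y = x -> m y o z = y -> m x o z = x.
Proof. intros H1 H2. rewrite <- H1 at 1. rewrite ax3, H2. exact H1. Qed.
Lemma le_antisym o x y : m x o y = x -> m y o x = y -> x = y.
Proof. intros H1 H2. transitivity (m x o y); [symmetry; exact H1|]. rewrite p321; exact H2. Qed.
Lemma le_meet o z x y : m z o x = z -> m z o y = z -> m z o (m x o y) = z.
Proof. intros H1 H2. rewrite <- ax3, H1. exact H2. Qed.
Lemma meet_le_l o a b : m (m a o b) o a = m a o b.
Proof. rewrite ax3, (p321 b o a), <- ax3, ax1b. reflexivity. Qed.
Lemma meet_le_r o a b : m (m a o b) o b = m a o b.
Proof. rewrite ax3, ax1b. reflexivity. Qed.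
Lemma meet_mono o a b a' b' : m a o a' = a -> m b o b' = b -> m (m a o b) o (m a' o b') = m a o b.
Proof.
  intros H1 H2. apply le_meet.
  - eapply le_trans; [apply meet_le_l|exact H1].
  - eapply le_trans; [apply meet_le_r|exact H2].
Qed.
Lemma Eb x b c : m b (m x b c) c = m x b c.
Proof. rewrite (p132 b), (p231 x b c). apply E1. Qed.
Lemma E1b a b c : m a (m a b c) c = m a b c.
Proof. rewrite (p132 a (m a b c) c), (p132 a b c). apply E1. Qed.
Lemma Ea a d e : m d (m a d e) a = m a d e.
Proof. rewrite (p132 d), (p213 a d e). apply E1. Qed.

Lemma CONV d e x y w : m d x e = x -> m d y e = y -> m x w y = w -> m d w e = w.
Proof.
  intros Hx Hy Hw.
  assert (G1x := G1 w d e x Hx). assert (G1y := G1 w d e y Hy).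
  set (w' := m w d e) in *.
  assert (H1 : m w' w x = w') by (rewrite p213; exact G1x).
  assert (H2 : m w' w y = w') by (rewrite p213; exact G1y).
  assert (H3 := le_meet w w' x y H1 H2). rewrite Hw, ax1c in H3.
  rewrite p213. fold w'. symmetry; exact H3.
Qed.

Lemma PRES d p a b c : m d p a = p -> m (m d b c) (m p b c) (m a b c) = m p b c.
Proof.
  intros Hp.
  set (gp := m p b c). set (gd := m d b c). set (ga := m a b c).
  assert (Cp : m b gp c = gp) by apply Eb.
  assert (Cd : m b gd c = gd) by apply Eb.
  assert (Ca : m b ga c = ga) by apply Eb.
  assert (H1 : m d gd gp = gd) by (apply G1; exact Cp).
  assert (H2 : m a ga gp = ga) by (apply G1; exact Cp).
  assert (L1' : m gd gp d = gd) by (rewrite <- p231; exact H1).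
  assert (L2' : m ga gp a = ga) by (rewrite <- p231; exact H2).
  set (m0 := m gd gp ga).
  assert (Hm1 : m m0 gp (m d gp a) = m0) by (apply meet_mono; assumption).
  assert (Hm2 : m (m d gp a) gp p = m d gp a).
  { pose proof (L1 d gp a p) as HL. rewrite (p132 d a p), Hp in HL. exact HL. }
  assert (Hm3 : m m0 gp p = m0) by (eapply le_trans; eassumption).
  assert (Hc : m b m0 c = m0).
  { apply (CONV b c gd ga m0 Cd Ca). apply E1b. }
  assert (Hg : m p gp m0 = gp) by (apply G1; exact Hc).
  assert (Hpa : m gp p m0 = gp) by (rewrite p213; exact Hg).
  assert (Hpb : m m0 p gp = m0) by (rewrite p132; exact Hm3).
  assert (E : gp = m0) by (apply (le_antisym p); assumption).
  symmetry; exact E.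
Qed.

Lemma MON d p a b c : m d p a = p -> m d (m p b c) (m a b c) = m p b c.
Proof.
  intros Hp. pose proof (PRES d p a b c Hp) as HP.
  set (gp := m p b c) in *. set (gd := m d b c) in *. set (ga := m a b c) in *.
  assert (H1 : m d gd ga = gd) by (apply G1; apply Eb).
  assert (A1 : m gp ga gd = gp) by (rewrite <- p231; exact HP).
  assert (A2 : m gd ga d = gd) by (rewrite <- p231; exact H1).
  assert (A3 := le_trans ga gp gd d A1 A2).
  rewrite p231. exact A3.
Qed.

Lemma Dlaw a b c d e : m (m a b c) d e = m (m a d e) b (m c d e).
Proof.
  set (Q := m a b c). set (Pa := m a d e). set (Pc := m c d e). set (v := m Pa b Pc).
  assert (Hde : m d v e = v).
  { apply (CONV d e Pa Pc v); [apply Eb|apply Eb|apply E1b]. }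
  assert (Hd : m Q v d = v).
  { assert (X1 : m d (m Pa b Pc) (m a b Pc) = m Pa b Pc) by (apply MON; apply Ea).
    assert (X2 : m d (m Pc b a) (m c b a) = m Pc b a) by (apply MON; apply Ea).
    rewrite (p321 Pc b a), (p321 c b a) in X2. fold Q in X2. fold v in X1.
    assert (Y1 : m v d (m a b Pc) = v) by (rewrite <- p213; exact X1).
    assert (Y2 : m (m a b Pc) d Q = m a b Pc) by (rewrite <- p213; exact X2).
    assert (Y3 := le_trans d _ _ _ Y1 Y2).
    rewrite p231. exact Y3. }
  assert (He : m Q v e = v).
  { assert (Ea' : forall x, m e (m x d e) x = m x d e).
    { intros x. rewrite (p132 x d e). apply Ea. }
    assert (X1 : m e (m Pa b Pc) (m a b Pc) = m Pa b Pc) by (apply MON; apply Ea').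
    assert (X2 : m e (m Pc b a) (m c b a) = m Pc b a) by (apply MON; apply Ea').
    rewrite (p321 Pc b a), (p321 c b a) in X2. fold Q in X2. fold v in X1.
    assert (Y1 : m v e (m a b Pc) = v) by (rewrite <- p213; exact X1).
    assert (Y2 : m (m a b Pc) e Q = m a b Pc) by (rewrite <- p213; exact X2).
    assert (Y3 := le_trans e _ _ _ Y1 Y2).
    rewrite p231. exact Y3. }
  symmetry. apply U3; assumption.
Qed.


Lemma L2 p q r o z : m (m p o q) o z = m p o q -> m (m q o r) o z = m q o r ->
  m (m p o r) o z = m p o r -> m (m p q r) o z = m p q r.
Proof.
  intros Hpq Hqr Hpr.
  set (s := m p q r). set (w := m s o z).
  assert (Gw : forall a, m a o z = a -> m s w a = w).
  { intros a Ha. apply G1. rewrite p213. exact Ha. }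
  assert (B1 : m p w q = w).
  { apply (CONV p q s (m p o q) w).
    - unfold s. rewrite (p132 p q r). apply E1b.
    - apply E1b.
    - apply Gw; exact Hpq. }
  assert (B2 : m q w r = w).
  { apply (CONV q r s (m q o r) w).
    - unfold s. rewrite (p213 p q r). apply E1b.
    - apply E1b.
    - apply Gw; exact Hqr. }
  assert (B3 : m p w r = w).
  { apply (CONV p r s (m p o r) w).
    - unfold s. apply E1b.
    - apply E1b.
    - apply Gw; exact Hpr. }
  change (w = m p q r). apply U3; assumption.
Qed.

Lemma KEY o u v w c z :
  m (m (m u o v) o c) o z = m (m u o v) o c ->
  m (m (m v o w) o c) o z = m (m v o w) o c ->
  m (m (m u o w) o c) o z = m (m u o w) o c ->
  m (m (m u v w) o c) o z = m (m u v w) o c.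
Proof.
  intros H1 H2 H3.
  assert (E1' : m (m u o c) o v = m (m u o v) o c).
  { rewrite ax3, (p321 c o v), <- ax3. reflexivity. }
  assert (E2' : m v o (m w o c) = m (m v o w) o c) by (rewrite ax3; reflexivity).
  assert (E3' : m (m u o c) o (m w o c) = m (m u o w) o c).
  { rewrite ax3, (p321 c o (m w o c)), ax3, ax1b, <- ax3. reflexivity. }
  rewrite (Dlaw u v w o c).
  apply L2; [rewrite E1'|rewrite E2'|rewrite E3']; assumption.
Qed.

Fixpoint meetl o (l : list M) : M :=
  match l with [] => o | x :: l' => match l' with [] => x | _ => m x o (meetl o l') end end.

Lemma meetl_cons o x l : l <> [] -> meetl o (x :: l) = m x o (meetl o l).
Proof. intros H; destruct l; [congruence|reflexivity]. Qed.

Lemma meetl_app o l1 l2 : l1 <> [] -> l2 <> [] ->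
  meetl o (l1 ++ l2) = m (meetl o l1) o (meetl o l2).
Proof.
  intros H1 H2. induction l1 as [|x l1 IH]; [congruence|].
  destruct l1 as [|y l1].
  - simpl. apply meetl_cons; exact H2.
  - rewrite <- app_comm_cons. rewrite meetl_cons by (simpl; congruence).
    rewrite IH by discriminate. rewrite (meetl_cons o x (y :: l1)) by discriminate. rewrite ax3. reflexivity.
Qed.

Lemma meetl_le o l x : In x l -> m (meetl o l) o x = meetl o l.
Proof.
  induction l as [|y l IH]; intros Hx; [destruct Hx|].
  destruct l as [|y' l].
  - destruct Hx as [<-|[]]. simpl. apply ax1b.
  - rewrite meetl_cons by congruence. destruct Hx as [<-|Hx].
    + apply meet_le_l.
    + eapply le_trans; [apply meet_le_r|]. apply IH; exact Hx.
Qed.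

Lemma le_meetl o l z : l <> [] -> (forall x, In x l -> m z o x = z) -> m z o (meetl o l) = z.
Proof.
  induction l as [|y l IH]; intros Hn H; [congruence|].
  destruct l as [|y' l].
  - simpl. apply H; left; reflexivity.
  - rewrite meetl_cons by congruence. apply le_meet.
    + apply H; left; reflexivity.
    + apply IH; [congruence|]. intros x Hx; apply H; right; exact Hx.
Qed.

Lemma meetl_set o L L' : L <> [] -> L' <> [] -> (forall y, In y L <-> In y L') -> meetl o L = meetl o L'.
Proof.
  intros H1 H2 H. apply (le_antisym o).
  - apply le_meetl; [exact H2|]. intros x Hx. apply meetl_le. apply H; exact Hx.
  - apply le_meetl; [exact H1|]. intros x Hx. apply meetl_le. apply H; exact Hx.
Qed.

Inductive Gen (g : list M) : M -> Prop :=
| gen_base x : In x g -> Gen g x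
| gen_med a b c : Gen g a -> Gen g b -> Gen g c -> Gen g (m a b c).

Definition Dset o (g : list M) e L := L <> [] /\ incl L g /\ m (meetl o L) o e = meetl o L.

Definition Pinv o g e := forall c z,
  (forall L, Dset o g e L -> m (m (meetl o L) o c) o z = m (meetl o L) o c) ->
  m (m e o c) o z = m e o c.

Lemma pair_help o g x y e c z : Pinv o g x -> Pinv o g y ->
  (forall L L', Dset o g x L -> Dset o g y L' -> Dset o g e (L ++ L')) ->
  (forall L, Dset o g e L -> m (m (meetl o L) o c) o z = m (meetl o L) o c) ->
  m (m (m x o y) o c) o z = m (m x o y) o c.
Proof.
  intros Px Py HD Hyp.
  rewrite !(ax3 x o y c). apply Px. intros L HL.
  assert (R1 : m (meetl o L) o (m y o c) = m y o (m (meetl o L) o c)).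
  { rewrite <- ax3, (p321 (meetl o L) o y), ax3. reflexivity. }
  rewrite R1. apply Py. intros L' HL'.
  assert (R2 : m (meetl o L') o (m (meetl o L) o c) = m (meetl o (L ++ L')) o c).
  { destruct HL as [HL _]. destruct HL' as [HL' _].
    rewrite meetl_app by assumption. rewrite <- ax3, (p321 (meetl o L') o (meetl o L)). reflexivity. }
  rewrite R2. apply Hyp. apply HD; assumption.
Qed.

Lemma Dset_pair o g a b c L L' : Dset o g a L -> Dset o g b L' ->
  m (m a o b) o (m a b c) = m a o b -> Dset o g (m a b c) (L ++ L').
Proof.
  intros [H1 [H2 H3]] [H1' [H2' H3']] HL.
  split; [destruct L; simpl; congruence|]. split.
  - intros x Hx; apply in_app_or in Hx as [Hx|Hx]; auto.
  - rewrite meetl_app by assumption. eapply le_trans; [|exact HL].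
    apply meet_mono; assumption.
Qed.

Lemma Pinv_gen o g e : Gen g e -> Pinv o g e.
Proof.
  induction 1 as [x Hx|a b c _ Pa _ Pb _ Pc].
  - intros c z Hyp. apply (Hyp [x]). split; [congruence|]. split.
    + intros y [<-|[]]; exact Hx.
    + simpl. apply ax1b.
  - intros c' z Hyp. apply KEY.
    + apply (pair_help o g a b (m a b c)); auto. intros L L' HL HL'. apply Dset_pair; auto. apply L1.
    + apply (pair_help o g b c (m a b c)); auto. intros L L' HL HL'.
      rewrite (p231 a b c). apply Dset_pair; auto. apply L1.
    + apply (pair_help o g a c (m a b c)); auto. intros L L' HL HL'.
      rewrite (p132 a b c). apply Dset_pair; auto. apply L1.
Qed.

Lemma inj_le o g e e' : Gen g e -> (forall L, Dset o g e L -> Dset o g e' L) -> m e o e' = e.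
Proof.
  intros He H. pose proof (Pinv_gen o g e He e e') as P.
  rewrite ax1b in P. apply P. intros L HL.
  destruct (H L HL) as [_ [_ H3]]. destruct HL as [_ [_ H3']].
  rewrite H3'. exact H3.
Qed.


Fixpoint subs (l : list M) : list (list M) :=
  match l with [] => [[]] | x :: l' => subs l' ++ map (cons x) (subs l') end.

Lemma subs_rep (g : list M) (S : M -> Prop) :
  exists L', In L' (subs g) /\ forall y, In y L' <-> (In y g /\ S y).
Proof.
  induction g as [|x g IH].
  - exists []. split; [left; reflexivity|]. intros y; simpl; tauto.
  - destruct IH as [L [HL HLi]]. destruct (classic (S x)) as [Sx|nSx].
    + exists (x :: L). split.
      * simpl. apply in_or_app. right. apply in_map. exact HL.
      * intros y. simpl. rewrite HLi. split.
        -- intros [<-|[H1 H2]]; auto.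
        -- intros [[<-|H1] H2]; auto.
    + exists L. split.
      * simpl. apply in_or_app. left. exact HL.
      * intros y. rewrite HLi. simpl. split.
        -- intros [H1 H2]; auto.
        -- intros [[<-|H1] H2]; [contradiction|auto].
Qed.

Definition fcode (o : M) (g : list M) (e : M) : list bool :=
  map (fun L => if excluded_middle_informative (L <> [] /\ m (meetl o L) o e = meetl o L)
                then true else false) (subs g).

Lemma map_eq_in {A B} (f f' : A -> B) l x : map f l = map f' l -> In x l -> f x = f' x.
Proof.
  induction l as [|y l IH]; simpl; intros H Hx; [destruct Hx|].
  injection H; intros H2 H1. destruct Hx as [<-|Hx]; auto.
Qed.

Lemma code_dset (o : M) (g : list M) (e e' : M) : fcode o g e = fcode o g e' -> forall L, Dset o g e L -> Dset o g e' L.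
Proof.
  intros Hc L [Hn [Hi Hl]].
  destruct (subs_rep g (fun y => In y L)) as [L' [HL' HL'i]].
  assert (Hs : forall y, In y L <-> In y L').
  { intros y. rewrite HL'i. split; [intros; split; auto|tauto]. }
  assert (Hn' : L' <> []).
  { destruct L as [|x L]; [congruence|]. intros E. subst L'. apply (Hs x). left; reflexivity. }
  assert (Em : meetl o L = meetl o L') by (apply meetl_set; assumption).
  pose proof (map_eq_in _ _ _ L' Hc HL') as Hf. cbv beta in Hf.
  destruct (excluded_middle_informative (L' <> [] /\ m (meetl o L') o e = meetl o L')) as [[_ A]|A].
  - destruct (excluded_middle_informative (L' <> [] /\ m (meetl o L') o e' = meetl o L')) as [[_ B]|B];
      [|discriminate].
    split; [exact Hn|]. split; [exact Hi|]. rewrite Em. exact B.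
  - exfalso. apply A. split; [exact Hn'|]. rewrite <- Em. exact Hl.
Qed.

Lemma code_inj (o : M) (g : list M) (e e' : M) : Gen g e -> Gen g e' -> fcode o g e = fcode o g e' -> e = e'.
Proof.
  intros He He' Hc. apply (le_antisym o).
  - apply (inj_le o g); [exact He|]. apply code_dset; exact Hc.
  - apply (inj_le o g); [exact He'|]. apply code_dset; symmetry; exact Hc.
Qed.

Fixpoint bls (n : nat) : list (list bool) :=
  match n with 0 => [[]] | S n => map (cons true) (bls n) ++ map (cons false) (bls n) end.
Lemma bls_in c : In c (bls (length c)).
Proof.
  induction c as [|b c IH]; simpl; [left; reflexivity|].
  apply in_or_app. destruct b; [left|right]; apply in_map; exact IH.
Qed.

Theorem gen_finite (o : M) (g : list M) : exists l, forall e, Gen g e -> In e l.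
Proof.
  set (pick := fun c : list bool =>
    match excluded_middle_informative (exists e, Gen g e /\ fcode o g e = c) with
    | left H => proj1_sig (constructive_indefinite_description _ H)
    | right _ => o end).
  exists (map pick (bls (length (subs g)))).
  intros e He. apply in_map_iff. exists (fcode o g e). split.
  - unfold pick. destruct (excluded_middle_informative _) as [H|H].
    + destruct (constructive_indefinite_description _ H) as [e0 [He0 Hc]]. simpl.
      apply (code_inj o g); assumption.
    + exfalso. apply H. exists e; split; [exact He|reflexivity].
  - unfold fcode at 1. rewrite <- (length_map (fun L => if excluded_middle_informative (L <> [] /\ m (meetl o L) o e = meetl o L) then true else false) (subs g)).
    apply bls_in.
Qed.

End MedS.

Open Scope R_scope.

Section Coarse.
Variable X : Type.
Variable d : X -> X -> R.
Variable mu : X -> X -> X -> X.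
Hypothesis Hd : is_metric d.

Lemma d_refl x : d x x = 0.
Proof. apply (metric_sep d Hd). reflexivity. Qed.
Lemma d_sym x y : d x y = d y x.
Proof. apply (metric_sym d Hd). Qed.
Lemma d_tri x y z : d x z <= d x y + d y z.
Proof. apply (metric_tri d Hd). Qed.
Lemma d_nn x y : 0 <= d x y.
Proof. apply (metric_nonneg d Hd). Qed.

Definition trip (x y z : X) : idx3 -> X := fun i => match i with i1 => x | i2 => y | i3 => z end.

Lemma perm12 : is_perm3 (fun i => match i with i1 => i2 | i2 => i1 | i3 => i3 end).
Proof. exists (fun i => match i with i1 => i2 | i2 => i1 | i3 => i3 end). split; intros []; reflexivity. Qed.
Lemma perm23 : is_perm3 (fun i => match i with i1 => i1 | i2 => i3 | i3 => i2 end).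
Proof. exists (fun i => match i with i1 => i1 | i2 => i3 | i3 => i2 end). split; intros []; reflexivity. Qed.
Lemma perm13 : is_perm3 (fun i => match i with i1 => i3 | i2 => i2 | i3 => i1 end).
Proof. exists (fun i => match i with i1 => i3 | i2 => i2 | i3 => i1 end). split; intros []; reflexivity. Qed.

Section Back.
Variable k0 : R.
Hypothesis Hk0 : forall a : idx3 -> X,
    d (mu (a i1) (a i1) (a i2)) (a i1) <= k0 /\
    forall s, is_perm3 s ->
      d (mu (a (s i1)) (a (s i2)) (a (s i3))) (mu (a i1) (a i2) (a i3)) <= k0.
Variables K H0 : R.
Hypothesis HK : 0 <= K.
Hypothesis HH0 : 0 <= H0.
Hypothesis HL : forall a a' b c, d (mu a b c) (mu a' b c) <= K * d a a' + H0.
Variable k4 : R.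
Hypothesis Hk4 : forall a b c e, d (mu (mu a b c) b e) (mu a b (mu c b e)) <= k4.

Lemma P12 x y z : d (mu y x z) (mu x y z) <= k0.
Proof. exact (proj2 (Hk0 (trip x y z)) _ perm12). Qed.
Lemma P23 x y z : d (mu x z y) (mu x y z) <= k0.
Proof. exact (proj2 (Hk0 (trip x y z)) _ perm23). Qed.
Lemma P13 x y z : d (mu z y x) (mu x y z) <= k0.
Proof. exact (proj2 (Hk0 (trip x y z)) _ perm13). Qed.
Lemma PM1 x y : d (mu x x y) x <= k0.
Proof. exact (proj1 (Hk0 (trip x y x))). Qed.

Definition H1' := 3 * H0 + 4 * k0.

Lemma Lip a b c a' b' c' :
  d (mu a b c) (mu a' b' c') <= K * (d a a' + d b b' + d c c') + H1'.
Proof.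
  unfold H1'.
  assert (A1 := HL a a' b c).
  assert (A2 : d (mu a' b c) (mu a' b' c) <= k0 + (K * d b b' + H0) + k0).
  { eapply Rle_trans; [apply (d_tri _ (mu b a' c))|].
    eapply Rle_trans; [apply Rplus_le_compat; [apply (P12 b a' c)|apply (d_tri _ (mu b' a' c))]|].
    pose proof (HL b b' a' c). pose proof (P12 a' b' c). lra. }
  assert (A3 : d (mu a' b' c) (mu a' b' c') <= k0 + (K * d c c' + H0) + k0).
  { eapply Rle_trans; [apply (d_tri _ (mu c b' a'))|].
    eapply Rle_trans; [apply Rplus_le_compat; [apply (P13 c b' a')|apply (d_tri _ (mu c' b' a'))]|].
    pose proof (HL c c' b' a'). pose proof (P13 a' b' c'). lra. }
  pose proof (d_tri (mu a b c) (mu a' b c) (mu a' b' c')).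
  pose proof (d_tri (mu a b c) (mu a' b' c) (mu a' b' c')).
  pose proof (d_tri (mu a' b c) (mu a' b' c) (mu a' b' c')).
  lra.
Qed.

Lemma Lip' a b c a' b' c' r1 r2 r3 : d a a' <= r1 -> d b b' <= r2 -> d c c' <= r3 ->
  d (mu a b c) (mu a' b' c') <= K * (r1 + r2 + r3) + H1'.
Proof.
  intros. eapply Rle_trans; [apply Lip|]. apply Rplus_le_compat_r.
  apply Rmult_le_compat_l; [exact HK|lra].
Qed.

Definition ev (env : nat -> X) (t : tm) : X := eval X mu env t.
Definition close (t s : tm) : Prop := exists C, forall env, d (ev env t) (ev env s) <= C.

Lemma close_refl t : close t t.
Proof. exists 0. intros env. rewrite d_refl. lra. Qed.
Lemma close_sym t s : close t s -> close s t.
Proof. intros [C H]. exists C. intros env. rewrite d_sym. apply H. Qed.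
Lemma close_trans t s r : close t s -> close s r -> close t r.
Proof.
  intros [C1 H1] [C2 H2]. exists (C1 + C2). intros env.
  eapply Rle_trans; [apply (d_tri _ (ev env s))|]. apply Rplus_le_compat; auto.
Qed.
Lemma close_cong a b c a' b' c' : close a a' -> close b b' -> close c c' -> close (N a b c) (N a' b' c').
Proof.
  intros [C1 H1] [C2 H2] [C3 H3]. exists (K * (C1 + C2 + C3) + H1'). intros env.
  unfold ev; simpl. apply Lip'; [apply H1|apply H2|apply H3].
Qed.
Lemma close_ax1 a b : close (N a a b) a.
Proof. exists k0. intros env. unfold ev; simpl. apply PM1. Qed.
Lemma close_ax2a a b c : close (N a b c) (N b a c).
Proof. exists k0. intros env. unfold ev; simpl. apply (P12 (eval X mu env b)). Qed.
Lemma close_ax2b a b c : close (N a b c) (N a c b).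
Proof. exists k0. intros env. unfold ev; simpl. apply (P23 (eval X mu env a) (eval X mu env c)). Qed.
Lemma close_ax3 a b c e : close (N (N a b c) b e) (N a b (N c b e)).
Proof. exists k4. intros env. unfold ev; simpl. apply Hk4. Qed.

Lemma close_ext t s : close t s -> close t = close s.
Proof.
  intros H. apply functional_extensionality; intros r. apply propositional_extensionality.
  split; intros H'.
  - apply (close_trans s t r); [apply close_sym; exact H|exact H'].
  - apply (close_trans t s r); assumption.
Qed.
Lemma close_of_eq t s : close t = close s -> close t s.
Proof. intros E. rewrite E. apply close_refl. Qed.

Fixpoint wf (n : nat) (t : tm) : Prop :=
  match t with V i => (i < n)%nat | N a b c => wf n a /\ wf n b /\ wf n c end.

Definition Q (n : nat) := {P : tm -> Prop | exists t, wf n t /\ P = close t}.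
Definition mkQ n t (H : wf n t) : Q n := exist _ (close t) (ex_intro _ t (conj H eq_refl)).
Definition rep {n} (q : Q n) : tm := proj1_sig (constructive_indefinite_description _ (proj2_sig q)).
Lemma rep_spec {n} (q : Q n) : wf n (rep q) /\ proj1_sig q = close (rep q).
Proof. unfold rep. destruct (constructive_indefinite_description _ _) as [t Ht]. exact Ht. Qed.
Lemma Q_ext {n} (q q' : Q n) : proj1_sig q = proj1_sig q' -> q = q'.
Proof.
  destruct q as [P HP], q' as [P' HP']; simpl; intros E. subst P'. f_equal. apply proof_irrelevance.
Qed.
Lemma q_mk {n} (q : Q n) : q = mkQ n (rep q) (proj1 (rep_spec q)).
Proof. apply Q_ext. simpl. apply (proj2 (rep_spec q)). Qed.
Lemma mkQ_eq n t s Ht Hs : close t s -> mkQ n t Ht = mkQ n s Hs.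
Proof. intros H. apply Q_ext. simpl. apply close_ext. exact H. Qed.
Lemma rep_mk n t Ht : close (rep (mkQ n t Ht)) t.
Proof.
  apply close_of_eq. rewrite <- (proj2 (rep_spec (mkQ n t Ht))). reflexivity.
Qed.
Lemma Q_ind' n (P : Q n -> Prop) : (forall t Ht, P (mkQ n t Ht)) -> forall q, P q.
Proof. intros H q. rewrite (q_mk q). apply H. Qed.

Definition mQ {n} (x y z : Q n) : Q n :=
  mkQ n (N (rep x) (rep y) (rep z))
    (conj (proj1 (rep_spec x)) (conj (proj1 (rep_spec y)) (proj1 (rep_spec z)))).

Lemma mQ_mk n a b c Ha Hb Hc :
  mQ (mkQ n a Ha) (mkQ n b Hb) (mkQ n c Hc) = mkQ n (N a b c) (conj Ha (conj Hb Hc)).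
Proof. apply mkQ_eq. apply close_cong; apply rep_mk. Qed.

Lemma mQ_ax1 n (x y : Q n) : mQ x x y = x.
Proof.
  revert y. pattern x; apply Q_ind'; clear x; intros a Ha y.
  pattern y; apply Q_ind'; clear y; intros b Hb.
  rewrite mQ_mk. apply mkQ_eq. apply close_ax1.
Qed.
Lemma mQ_ax2a n (x y z : Q n) : mQ x y z = mQ y x z.
Proof.
  revert y z. pattern x; apply Q_ind'; clear x; intros a Ha y z.
  revert z. pattern y; apply Q_ind'; clear y; intros b Hb z.
  pattern z; apply Q_ind'; clear z; intros c Hc.
  rewrite !mQ_mk. apply mkQ_eq. apply close_ax2a.
Qed.
Lemma mQ_ax2b n (x y z : Q n) : mQ x y z = mQ x z y.
Proof.
  revert y z. pattern x; apply Q_ind'; clear x; intros a Ha y z.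
  revert z. pattern y; apply Q_ind'; clear y; intros b Hb z.
  pattern z; apply Q_ind'; clear z; intros c Hc.
  rewrite !mQ_mk. apply mkQ_eq. apply close_ax2b.
Qed.
Lemma mQ_ax3 n (x y z w : Q n) : mQ (mQ x y z) y w = mQ x y (mQ z y w).
Proof.
  revert y z w. pattern x; apply Q_ind'; clear x; intros a Ha y z w.
  revert z w. pattern y; apply Q_ind'; clear y; intros b Hb z w.
  revert w. pattern z; apply Q_ind'; clear z; intros c Hc w.
  pattern w; apply Q_ind'; clear w; intros e He.
  rewrite !mQ_mk. apply mkQ_eq. apply close_ax3.
Qed.


Lemma fin_bound {T} (l : list T) (P : T -> R -> Prop) :
  (forall x C C', P x C -> C <= C' -> P x C') -> (forall x, In x l -> exists C, P x C) ->
  exists C, 0 <= C /\ forall x, In x l -> P x C.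
Proof.
  intros Hm. induction l as [|y l IH]; intros H.
  - exists 0. split; [lra|]. intros x [].
  - destruct IH as [C1 [HC1 H1]]. { intros x Hx; apply H; right; exact Hx. }
    destruct (H y (or_introl eq_refl)) as [C2 H2].
    exists (Rmax C1 C2). split; [eapply Rle_trans; [exact HC1|apply Rmax_l]|].
    intros x [<-|Hx].
    + eapply Hm; [exact H2|apply Rmax_r].
    + eapply Hm; [apply H1; exact Hx|apply Rmax_l].
Qed.

Section FixN.
Variable n : nat.
Hypothesis Hn : (0 < n)%nat.

Lemma Hn' : n <> 0%nat.
Proof. lia. Qed.
Definition gq (i : nat) : Q n := mkQ n (V (i mod n)) (Nat.mod_upper_bound i n Hn').
Definition gl : list (Q n) := map gq (seq 0 n).

Lemma all_gen (q : Q n) : Gen _ mQ gl q.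
Proof.
  pattern q; apply Q_ind'; clear q. intros t Ht. induction t as [i|a IHa b IHb c IHc].
  - apply gen_base. unfold gl. apply in_map_iff. exists i. split.
    + unfold gq. apply mkQ_eq. simpl in Ht. rewrite Nat.mod_small by exact Ht. apply close_refl.
    + apply in_seq. simpl in Ht. lia.
  - destruct Ht as [Ha [Hb Hc]].
    rewrite <- (mQ_mk n a b c Ha Hb Hc). apply gen_med; auto.
Qed.

Lemma Q_finite : exists l : list (Q n), forall q, In q l.
Proof.
  destruct (gen_finite _ mQ (mQ_ax1 n) (mQ_ax2a n) (mQ_ax2b n) (mQ_ax3 n) (gq 0) gl) as [l Hl].
  exists l. intros q. apply Hl. apply all_gen.
Qed.

Lemma Q_median : is_median_algebra (@mQ n).
Proof.
  split; [apply mQ_ax1|]. split; [|apply mQ_ax3].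
  intros a1 a2 a3. split; [apply mQ_ax2a|]. split; [apply mQ_ax2b|].
  apply (p321 _ mQ (mQ_ax2a n) (mQ_ax2b n)).
Qed.

Lemma per_n : exists B, 0 <= B /\ forall A : list X, length A = n ->
  exists (Pi : Type) (muPi : Pi -> Pi -> Pi -> Pi),
      is_finite_type Pi /\ is_median_algebra muPi /\
      exists (pi : {a : X | In a A} -> Pi) (lam : Pi -> X),
        (forall x y z : Pi, d (lam (muPi x y z)) (mu (lam x) (lam y) (lam z)) <= B) /\
        (forall a : {a : X | In a A}, d (lam (pi a)) (proj1_sig a) <= B).
Proof.
  destruct Q_finite as [l Hl].
  destruct (fin_bound (list_prod l (list_prod l l))
     (fun w C => forall env, d (ev env (rep (mQ (fst w) (fst (snd w)) (snd (snd w)))))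
                              (ev env (N (rep (fst w)) (rep (fst (snd w))) (rep (snd (snd w))))) <= C))
     as [B1 [HB1 H1]].
  { intros w C C' H HC env. eapply Rle_trans; [apply H|exact HC]. }
  { intros w _. apply rep_mk. }
  destruct (fin_bound (seq 0 n)
     (fun i C => forall env, d (ev env (rep (gq i))) (ev env (V i)) <= C)) as [B2 [HB2 H2]].
  { intros w C C' H HC env. eapply Rle_trans; [apply H|exact HC]. }
  { intros i Hi. apply in_seq in Hi.
    destruct (rep_mk n (V (i mod n)) (Nat.mod_upper_bound i n Hn')) as [C HC].
    exists C. intros env. specialize (HC env).
    assert (E : ev env (V i) = ev env (V (i mod n))) by (rewrite Nat.mod_small by lia; reflexivity).
    rewrite E. exact HC. }
  exists (Rmax B1 B2). split; [eapply Rle_trans; [exact HB1|apply Rmax_l]|].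
  intros A HA.
  destruct A as [|a0 A']; [simpl in HA; lia|].
  set (env := fun i => nth i (a0 :: A') a0).
  exists (Q n), mQ. split.
  { destruct Q_finite as [l' Hl']. exists l'. exact Hl'. }
  split; [apply Q_median|].
  set (idx := fun a : {a : X | In a (a0 :: A')} =>
          proj1_sig (constructive_indefinite_description _ (In_nth (a0 :: A') (proj1_sig a) a0 (proj2_sig a)))).
  exists (fun a => gq (idx a)), (fun q => ev env (rep q)). split.
  - intros x y z. eapply Rle_trans; [|apply Rmax_l].
    apply (H1 (x, (y, z))). apply in_prod; [apply Hl|apply in_prod; apply Hl].
  - intros a. eapply Rle_trans; [|apply Rmax_r].
    unfold idx. destruct (constructive_indefinite_description _ _) as [i [Hi Hia]]. simpl.
    rewrite HA in Hi.
    pose proof (H2 i (proj2 (in_seq n 0 i) (conj (Nat.le_0_l i) Hi)) env) as E.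
    unfold ev at 2 in E. simpl in E. unfold env in E. rewrite Hia in E. exact E.
Qed.

End FixN.

Lemma C2_holds : cond_C2 d mu.
Proof.
  assert (HP : forall p : nat, exists B, 0 <= B /\ forall A : list X, NoDup A -> (1 <= length A <= p)%nat ->
    exists (Pi : Type) (muPi : Pi -> Pi -> Pi -> Pi),
      is_finite_type Pi /\ is_median_algebra muPi /\
      exists (pi : {a : X | In a A} -> Pi) (lam : Pi -> X),
        (forall x y z : Pi, d (lam (muPi x y z)) (mu (lam x) (lam y) (lam z)) <= B) /\
        (forall a : {a : X | In a A}, d (lam (pi a)) (proj1_sig a) <= B)).
  { induction p as [|p IH].
    - exists 0. split; [lra|]. intros A _ HA. lia.
    - destruct IH as [B1 [HB1 IH]].
      destruct (per_n (S p) ltac:(lia)) as [B2 [HB2 H2]].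
      exists (Rmax B1 B2). split; [eapply Rle_trans; [exact HB1|apply Rmax_l]|].
      intros A HN HA.
      destruct (Nat.eq_dec (length A) (S p)) as [E|E].
      + destruct (H2 A E) as [Pi [muPi [F [Med [pi [lam [Ha Hb]]]]]]].
        exists Pi, muPi. split; [exact F|]. split; [exact Med|]. exists pi, lam. split.
        * intros; eapply Rle_trans; [apply Ha|apply Rmax_r].
        * intros; eapply Rle_trans; [apply Hb|apply Rmax_r].
      + destruct (IH A HN ltac:(lia)) as [Pi [muPi [F [Med [pi [lam [Ha Hb]]]]]]].
        exists Pi, muPi. split; [exact F|]. split; [exact Med|]. exists pi, lam. split.
        * intros; eapply Rle_trans; [apply Ha|apply Rmax_l].
        * intros; eapply Rle_trans; [apply Hb|apply Rmax_l]. }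
  exists (fun p => proj1_sig (constructive_indefinite_description _ (HP p))).
  split.
  - intros p. exact (proj1 (proj2_sig (constructive_indefinite_description _ (HP p)))).
  - intros p A HN HA. apply (proj2 (proj2_sig (constructive_indefinite_description _ (HP p)))); assumption.
Qed.

End Back.
End Coarse.

Section Fwd.
Variable X : Type.
Variable d : X -> X -> R.
Variable mu : X -> X -> X -> X.
Hypothesis Hd : is_metric d.
Variables K H0 : R.
Hypothesis HC1 : forall a b c a' b' c',
    d (mu a b c) (mu a' b' c') <= K * (d a a' + d b b' + d c c') + H0.
Variable H : nat -> R.
Hypothesis Hpos : forall p, 0 <= H p.
Hypothesis HC2 : forall (p : nat) (A : list X), NoDup A -> (1 <= length A <= p)%nat ->
    exists (Pi : Type) (muPi : Pi -> Pi -> Pi -> Pi),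
      is_finite_type Pi /\ is_median_algebra muPi /\
      exists (pi : {a : X | In a A} -> Pi) (lam : Pi -> X),
        (forall x y z : Pi, d (lam (muPi x y z)) (mu (lam x) (lam y) (lam z)) <= H p) /\
        (forall a : {a : X | In a A}, d (lam (pi a)) (proj1_sig a) <= H p).

Let Kp := Rabs K.
Let Hp := Rabs H0.
Let h := H 4.

Lemma Kp_nn : 0 <= Kp. Proof. apply Rabs_pos. Qed.
Lemma Hp_nn : 0 <= Hp. Proof. apply Rabs_pos. Qed.
Lemma h_nn : 0 <= h. Proof. apply Hpos. Qed.

Lemma LipF a b c a' b' c' r1 r2 r3 : d a a' <= r1 -> d b b' <= r2 -> d c c' <= r3 ->
  d (mu a b c) (mu a' b' c') <= Kp * (r1 + r2 + r3) + Hp.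
Proof.
  intros H1 H2 H3. eapply Rle_trans; [apply HC1|].
  pose proof (d_nn X d Hd a a'). pose proof (d_nn X d Hd b b'). pose proof (d_nn X d Hd c c').
  apply Rplus_le_compat; [|apply RRle_abs].
  apply Rle_trans with (Kp * (d a a' + d b b' + d c c')).
  - apply Rmult_le_compat_r; [lra|apply RRle_abs].
  - apply Rmult_le_compat_l; [apply Kp_nn|lra].
Qed.

Lemma dedup (l : list X) : exists A, NoDup A /\ (forall x, In x A <-> In x l) /\ (length A <= length l)%nat.
Proof.
  induction l as [|x l IH].
  - exists []. split; [constructor|]. split; [tauto|simpl; lia].
  - destruct IH as [A [HN [HA HL]]]. destruct (classic (In x A)) as [Hx|Hx].
    + exists A. split; [exact HN|]. split; [|simpl; lia].
      intros y. simpl. rewrite HA. split; [tauto|]. intros [<-|Hy]; [apply HA; exact Hx|exact Hy].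
    + exists (x :: A). split; [constructor; assumption|]. split; [|simpl; lia].
      intros y. simpl. rewrite HA. tauto.
Qed.

Lemma approx (l : list X) : l <> [] -> (length l <= 4)%nat ->
  exists (Pi : Type) (muPi : Pi -> Pi -> Pi -> Pi), is_median_algebra muPi /\
    exists lam : Pi -> X,
      (forall x y z : Pi, d (lam (muPi x y z)) (mu (lam x) (lam y) (lam z)) <= h) /\
      (forall x, In x l -> exists y, d (lam y) x <= h).
Proof.
  intros Hn Hl. destruct (dedup l) as [A [HN [HA HLA]]].
  assert (HA1 : (1 <= length A)%nat).
  { destruct l as [|x l]; [congruence|]. destruct A; [|simpl; lia].
    exfalso. apply (proj2 (HA x)). left; reflexivity. }
  destruct (HC2 4 A HN ltac:(lia)) as [Pi [muPi [_ [Hmed [pi [lam [H1 H2]]]]]]].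
  exists Pi, muPi. split; [exact Hmed|]. exists lam. split; [exact H1|].
  intros x Hx. exists (pi (exist _ x (proj2 (HA x) Hx))). apply (H2 (exist _ x _)).
Qed.

Lemma med_perm (Pi : Type) (muPi : Pi -> Pi -> Pi -> Pi) (Hm : is_median_algebra muPi)
  (y : idx3 -> Pi) (s : idx3 -> idx3) : is_perm3 s ->
  muPi (y (s i1)) (y (s i2)) (y (s i3)) = muPi (y i1) (y i2) (y i3).
Proof.
  intros [s' [Hs1 Hs2]].
  destruct Hm as [_ [HP _]].
  assert (A2a : forall a b c, muPi a b c = muPi b a c) by (intros; apply HP).
  assert (A2b : forall a b c, muPi a b c = muPi a c b) by (intros; apply HP).
  pose proof (p213 Pi muPi A2a) as Q213. pose proof (p132 Pi muPi A2b) as Q132.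
  pose proof (p321 Pi muPi A2a A2b) as Q321. pose proof (p312 Pi muPi A2a A2b) as Q312.
  pose proof (p231 Pi muPi A2a A2b) as Q231.
  pose proof (Hs1 i1) as E1. pose proof (Hs1 i2) as E2. pose proof (Hs1 i3) as E3.
  destruct (s i1), (s i2), (s i3); try congruence;
  first [reflexivity | apply Q213 | apply Q132 | apply Q321 | apply Q312 | apply Q231].
Qed.


Lemma Fwd_C1' : cond_C1' d mu.
Proof.
  exists Kp, Hp. split; [apply Kp_nn|]. split; [apply Hp_nn|].
  intros a a' b c.
  assert (E := LipF a b c a' b c (d a a') 0 0 (Rle_refl _)
            ltac:(rewrite (d_refl X d Hd); lra) ltac:(rewrite (d_refl X d Hd); lra)).
  replace (d a a' + 0 + 0) with (d a a') in E by ring. exact E.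
Qed.

Lemma Fwd_C0' : cond_C0' d mu.
Proof.
  exists (2 * (Kp * (h + h + h) + Hp) + 2 * h).
  intros a.
  destruct (approx [a i1; a i2; a i3] ltac:(discriminate) ltac:(simpl; lia))
    as [Pi [muPi [Hmed [lam [Hl Happ]]]]].
  assert (Hy : forall i, exists y, d (lam y) (a i) <= h) by (intros []; apply Happ; simpl; auto).
  set (yh := fun i => proj1_sig (constructive_indefinite_description _ (Hy i))).
  assert (Hyh : forall i, d (lam (yh i)) (a i) <= h).
  { intros i. unfold yh. exact (proj2_sig (constructive_indefinite_description _ (Hy i))). }
  assert (Hyh' : forall i, d (a i) (lam (yh i)) <= h) by (intros i; rewrite (d_sym X d Hd); apply Hyh).
  pose proof Kp_nn as NK. pose proof Hp_nn as NH. pose proof h_nn as Nh.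
  assert (P3 : 0 <= Kp * (h + h + h)) by (apply Rmult_le_pos; lra).
  split.
  - pose proof (LipF _ _ _ _ _ _ _ _ _ (Hyh' i1) (Hyh' i1) (Hyh' i2)) as A1.
    pose proof (Hl (yh i1) (yh i1) (yh i2)) as A2. rewrite (d_sym X d Hd) in A2.
    destruct Hmed as [Hm1 _]. rewrite Hm1 in A2.
    pose proof (d_tri X d Hd (mu (a i1) (a i1) (a i2)) (mu (lam (yh i1)) (lam (yh i1)) (lam (yh i2))) (a i1)).
    pose proof (d_tri X d Hd (mu (lam (yh i1)) (lam (yh i1)) (lam (yh i2))) (lam (yh i1)) (a i1)).
    pose proof (Hyh i1). lra.
  - intros s Hs.
    pose proof (LipF _ _ _ _ _ _ _ _ _ (Hyh' (s i1)) (Hyh' (s i2)) (Hyh' (s i3))) as A1.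
    pose proof (Hl (yh (s i1)) (yh (s i2)) (yh (s i3))) as A2. rewrite (d_sym X d Hd) in A2.
    rewrite (med_perm Pi muPi Hmed yh s Hs) in A2.
    pose proof (Hl (yh i1) (yh i2) (yh i3)) as A3.
    pose proof (LipF _ _ _ _ _ _ _ _ _ (Hyh i1) (Hyh i2) (Hyh i3)) as A4.
    set (u := mu (a (s i1)) (a (s i2)) (a (s i3))) in *.
    set (u1 := mu (lam (yh (s i1))) (lam (yh (s i2))) (lam (yh (s i3)))) in *.
    set (u2 := lam (muPi (yh i1) (yh i2) (yh i3))) in *.
    set (u3 := mu (lam (yh i1)) (lam (yh i2)) (lam (yh i3))) in *.
    set (u4 := mu (a i1) (a i2) (a i3)) in *.
    pose proof (d_tri X d Hd u u1 u4). pose proof (d_tri X d Hd u1 u2 u4).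
    pose proof (d_tri X d Hd u2 u3 u4). lra.
Qed.

Lemma Fwd_C2' : cond_C2' d mu.
Proof.
  pose proof Kp_nn as NK. pose proof Hp_nn as NH. pose proof h_nn as Nh.
  set (r1 := Kp * (h + h + h) + Hp + h).
  assert (Hr1 : 0 <= r1) by (unfold r1; pose proof (Rmult_le_pos Kp (h+h+h) ltac:(lra) ltac:(lra)); lra).
  set (r2 := Kp * (r1 + h + h) + Hp + h).
  assert (Hr2 : 0 <= r2) by (unfold r2; pose proof (Rmult_le_pos Kp (r1+h+h) ltac:(lra) ltac:(lra)); lra).
  exists (2 * r2 + 1). split; [lra|].
  intros a b c e.
  destruct (approx [a; b; c; e] ltac:(discriminate) ltac:(simpl; lia))
    as [Pi [muPi [Hmed [lam [Hl Happ]]]]].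
  destruct (Happ a ltac:(simpl; auto)) as [ya Ha].
  destruct (Happ b ltac:(simpl; auto)) as [yb Hb].
  destruct (Happ c ltac:(simpl; auto)) as [yc Hc].
  destruct (Happ e ltac:(simpl; auto)) as [ye He].
  rewrite (d_sym X d Hd) in Ha, Hb, Hc, He.
  assert (G : forall x y z yx yy yz, d x (lam yx) <= h -> d y (lam yy) <= h -> d z (lam yz) <= h ->
             d (mu x y z) (lam (muPi yx yy yz)) <= r1).
  { intros x y z yx yy yz H1 H2 H3. pose proof (LipF _ _ _ _ _ _ _ _ _ H1 H2 H3) as A.
    pose proof (Hl yx yy yz) as B. rewrite (d_sym X d Hd) in B.
    pose proof (d_tri X d Hd (mu x y z) (mu (lam yx) (lam yy) (lam yz)) (lam (muPi yx yy yz))).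
    unfold r1. lra. }
  assert (G2 : forall x y z yx yy yz, d x (lam yx) <= r1 -> d y (lam yy) <= h -> d z (lam yz) <= h ->
             d (mu x y z) (lam (muPi yx yy yz)) <= r2).
  { intros x y z yx yy yz H1 H2 H3. pose proof (LipF _ _ _ _ _ _ _ _ _ H1 H2 H3) as A.
    pose proof (Hl yx yy yz) as B. rewrite (d_sym X d Hd) in B.
    pose proof (d_tri X d Hd (mu x y z) (mu (lam yx) (lam yy) (lam yz)) (lam (muPi yx yy yz))).
    unfold r2. lra. }
  pose proof (G a b c ya yb yc Ha Hb Hc) as S1.
  pose proof (G c b e yc yb ye Hc Hb He) as S2.
  pose proof (G2 _ _ _ _ _ _ S1 Hb He) as T1.
  assert (G3 : forall x y z yx yy yz, d x (lam yx) <= h -> d y (lam yy) <= h -> d z (lam yz) <= r1 ->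
             d (mu x y z) (lam (muPi yx yy yz)) <= r2).
  { intros x y z yx yy yz H1 H2 H3. pose proof (LipF _ _ _ _ _ _ _ _ _ H1 H2 H3) as A.
    pose proof (Hl yx yy yz) as B. rewrite (d_sym X d Hd) in B.
    pose proof (d_tri X d Hd (mu x y z) (mu (lam yx) (lam yy) (lam yz)) (lam (muPi yx yy yz))).
    assert (E : Kp * (h + h + r1) = Kp * (r1 + h + h)) by ring.
    unfold r2. lra. }
  pose proof (G3 _ _ _ _ _ _ Ha Hb S2) as T2.
  destruct Hmed as [_ [_ Hm3]]. rewrite Hm3 in T1.
  pose proof (d_tri X d Hd (mu (mu a b c) b e) (lam (muPi ya yb (muPi yc yb ye))) (mu a b (mu c b e))) as T3.
  rewrite (d_sym X d Hd (lam _) (mu a b (mu c b e))) in T3. lra.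
Qed.

End Fwd.

Theorem theorem3p1 (X : Type) (d : X -> X -> R) (mu : X -> X -> X -> X) :
  is_metric d ->
  (cond_C1 d mu /\ cond_C2 d mu <-> cond_C0' d mu /\ cond_C1' d mu /\ cond_C2' d mu).
Proof.
  intros Hd. split.
  - intros [[K [H0 HC1]] [H [Hpos HC2]]].
    split; [|split].
    + exact (Fwd_C0' X d mu Hd K H0 HC1 H Hpos HC2).
    + exact (Fwd_C1' X d mu Hd K H0 HC1).
    + exact (Fwd_C2' X d mu Hd K H0 HC1 H Hpos HC2).
  - intros [[k0 Hk0] [[K [H0 [HK [HH0 HL]]]] [k4 [_ Hk4]]]].
    split.
    + exists K, (H1' k0 H0). exact (Lip X d mu Hd k0 Hk0 K H0 HL).
    + exact (C2_holds X d mu Hd k0 Hk0 K H0 HK HL k4 Hk4).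
Qed.
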